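(* Let $\mathbf{G}=(\mathcal{V},\mathcal{E})$ be a directed graph on $\mathcal{V}=\{1,\dots,m\}$, let $a>0$, and let $\{r_{ij}\}_{(i,j)\in\mathcal{E}}$ be independent random variables, each uniform on $[0,ma)$. Define $t_i=\mathrm{mod}\big(\sum_{j:(j,i)\in\mathcal{E}} r_{ji}-\sum_{j:(i,j)\in\mathcal{E}} r_{ij},\,ma\big)$ for $i\in\mathcal{V}$. If the undirected graph $\bar{\mathbf{G}}$ is connected, then the vector $\mathbf{t}=(t_1,\dots,t_m)$ is uniformly distributed over the set of points of $[0,ma)^m$ satisfying $\mathrm{mod}\big(\sum_{i=1}^m t_i, ma\big)=0$.
   Context: $\bar{\mathbf{G}}$ is the undirected graph on $\mathcal{V}$ obtained from $\mathbf{G}$ by ignoring edge orientations. For $a'>0$ and real $y$, $\mathrm{mod}(y,a')=y-pa'$ where $p$ is the unique integer with $y-pa'\in[0,a')$; equivalently $\mathbf{t}=\mathrm{mod}(B\mathbf{r},ma)$ entrywise, with $B$ the incidence matrix of $\mathbf{G}$ and $\mathbf{r}$ the vector of the $r_{ij}$. *)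

(* Defs.v *)
From HB Require Import structures.
From mathcomp Require Import all_boot all_order all_algebra.
From mathcomp Require Import all_classical all_reals all_analysis.
Set Implicit Arguments. Unset Strict Implicit. Unset Printing Implicit Defensive.
Import Order.TTheory GRing.Theory Num.Theory.
Local Open Scope classical_set_scope.
Local Open Scope ring_scope.

Definition modr (R : realType) (y a' : R) : R :=
  y - (Num.floor (y / a'))%:~R * a'.

Definition ubar (m : nat) (E : {set 'I_m * 'I_m}) : rel 'I_m :=
  fun i j => ((i, j) \in E) || ((j, i) \in E).

Definition uconnected (m : nat) (E : {set 'I_m * 'I_m}) : Prop :=
  forall i j : 'I_m, connect (ubar E) i j.

Definition mutually_independent (R : realType) (d : measure_display)
  (T : measurableType d) (P : probability T R) (I : finType)
  (J : {set I}) (X : I -> T -> R) : Prop :=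
  (forall i, i \in J -> measurable_fun setT (X i)) /\
  forall (K : {set I}) (B : I -> set R), K \subset J ->
    (forall i, i \in K -> measurable (B i)) ->
    P [set w | forall i, i \in K -> B i (X i w)] =
    (\prod_(i in K) P (X i @^-1` B i))%E.

Definition uniform_on (R : realType) (d : measure_display)
  (T : measurableType d) (P : probability T R) (X : T -> R) (lo hi : R) : Prop :=
  measurable_fun setT X /\
  forall A : set R, measurable A ->
    P (X @^-1` A) = (lebesgue_measure (A `&` `[lo, hi[) * ((hi - lo)^-1)%:E)%E.

Definition tvec (R : realType) (d : measure_display) (T : measurableType d)
  (m : nat) (E : {set 'I_m * 'I_m}) (a : R) (r : 'I_m * 'I_m -> T -> R)
  (i : 'I_m) : T -> R :=
  fun w => modr (\sum_(e in E | e.2 == i) r e w - \sum_(e in E | e.1 == i) r e w)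
                (m%:R * a).

(* Main.v *)
Require Import Defs.
From HB Require Import structures.
From mathcomp Require Import all_boot all_order all_algebra.
From mathcomp Require Import all_classical all_reals all_analysis.
From mathcomp Require Import measurable_realfun.
From mathcomp Require Import lra.
Set Implicit Arguments. Unset Strict Implicit. Unset Printing Implicit Defensive.
Import Order.TTheory GRing.Theory Num.Theory.
Import numFieldNormedType.Exports.
Local Open Scope classical_set_scope.
Local Open Scope ring_scope.
Section modr_lemmas.
Context (R : realType) (c : R) (c0 : 0 < c).

Lemma modr_eq (y : R) (n : int) : n%:~R * c <= y -> y < n%:~R * c + c ->
  modr y c = y - n%:~R * c.
Proof.
move=> h1 h2; rewrite /modr; congr (_ - _ * _); congr (_%:~R).
apply: floor_def; rewrite intrD.
by rewrite ler_pdivlMr // ltr_pdivrMr // mulrDl mul1r h1 h2.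
Qed.

Lemma modr_ge0 y : 0 <= modr y c.
Proof.
rewrite /modr subr_ge0 -ler_pdivlMr //; exact: floor_le.
Qed.

Lemma modr_lt y : modr y c < c.
Proof.
rewrite /modr ltrBlDr -[X in _ < X + _]mul1r -mulrDl -ltr_pdivrMr // addrC.
by have /andP[_] := floor_itv (y / c); rewrite intrD.
Qed.

Lemma modr_int (n : int) : modr (n%:~R * c) c = 0.
Proof. by rewrite (@modr_eq _ n) ?subrr ?lexx // ltrDl. Qed.
End modr_lemmas.
Lemma leb_shift (R : realType) (t : R) (A : set R) : measurable A ->
  lebesgue_measure ((fun x => x + t) @^-1` A) = lebesgue_measure A.
Proof.
move=> mA.
have mf : measurable_fun setT (fun x : R => x + t).
  by apply: measurable_funD => //; exact: measurable_cst.
pose mu := @measure_function_pushforward__canonical__measure_function_Measure _ _ (measurableTypeR R) (measurableTypeR R) R (@lebesgue_measure R) _ mf.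
have := @lebesgue_measure_unique R mu _ A mA.
move=> -> //.
move=> _ [[x y] _ <-] /=.
rewrite /mu /= /pushforward.
have -> : (fun x0 : R => x0 + t) @^-1` `]x, y] = `]x - t, y - t]%classic.
  by apply/seteqP; split=> z /=; rewrite !in_itv /= ltrBlDr lerBrDr.
rewrite !lebesgue_measure_itv /= !lte_fin ltrD2r.
by case: ifP => // _; rewrite -EFinB; congr (_%:E); rewrite opprB addrA subrK.
Qed.
Section key.
Context d (T : measurableType d) (R : realType) (P : probability T R).
Variables (U Y : T -> R) (mU : measurable_fun setT U) (mY : measurable_fun setT Y).
Variables (G : set T) (mG : measurable G).
Variables (D : set (R * R)) (mD : measurable D) (cst : \bar R).
Hypothesis indep : forall A B, measurable A -> measurable B ->
  P (U @^-1` A `&` (Y @^-1` B `&` G)) = (P (U @^-1` A) * P (Y @^-1` B `&` G))%E.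
Hypothesis sec : forall y, P (U @^-1` (xsection D y)) = cst.

Definition key_m1 := pushforward (mrestr P mG) Y.
Let i1 := measure_function_pushforward__canonical__measure_function_Measure (mrestr P mG) mY.
HB.instance Definition _ := isMeasure.Build _ _ _ key_m1 (measure0 i1) (measure_ge0 i1) (@measure_semi_sigma_additive _ _ _ i1).
Let fin1 : fin_num_fun key_m1.
Proof.
move=> A mA; rewrite /key_m1 /pushforward /mrestr; apply: fin_num_measure.
apply: measurableI => //; rewrite -[X in measurable X]setTI; exact: mY.
Qed.
HB.instance Definition _ := Measure_isFinite.Build _ _ _ key_m1 fin1.

Definition key_m2 := pushforward P U.
Let i2 := measure_function_pushforward__canonical__measure_function_Measure P mU.
HB.instance Definition _ := isMeasure.Build _ _ _ key_m2 (measure0 i2) (measure_ge0 i2) (@measure_semi_sigma_additive _ _ _ i2).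
Let fin2 : fin_num_fun key_m2.
Proof.
move=> A mA; rewrite /key_m2 /pushforward; apply: fin_num_measure.
rewrite -[X in measurable X]setTI; exact: mU.
Qed.
HB.instance Definition _ := Measure_isFinite.Build _ _ _ key_m2 fin2.

Let mYU : measurable_fun setT (fun w => (Y w, U w)).
Proof. exact: measurable_fun_pair. Qed.
Definition key_m3 := pushforward (mrestr P mG) (fun w => (Y w, U w)).
Let i3 := measure_function_pushforward__canonical__measure_function_Measure (mrestr P mG) mYU.
HB.instance Definition _ := isMeasure.Build _ _ _ key_m3 (measure0 i3) (measure_ge0 i3) (@measure_semi_sigma_additive _ _ _ i3).

Lemma key_lemma : P ([set w | D (Y w, U w)] `&` G) = (cst * P G)%E.
Proof.
have := @product_measure_unique _ _ R R R key_m1 key_m2 key_m3.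
move=> /(_ _ D mD) h.
rewrite -[LHS]/(key_m3 D) -h.
  rewrite /product_measure1 /=.
  under eq_integral do rewrite /key_m2 /pushforward sec.
  rewrite integral_cst //; congr (_ * _)%E.
  by rewrite /= /key_m1 /pushforward /mrestr preimage_setT setTI.
move=> B A mB mA.
rewrite /key_m3 /key_m1 /key_m2 /pushforward /mrestr.
rewrite muleC -indep //; congr (P _).
by apply/seteqP; split => w /=; tauto.
Qed.
End key.

Lemma in_coP (R : realType) (a b v : R) : (`[a, b[%classic : set R) v <-> a <= v < b.
Proof. by rewrite /= in_itv. Qed.

Lemma leb_window (R : realType) (c x : R) (A : set R) : 0 < c -> measurable A ->
  lebesgue_measure [set v | x <= v < x + c /\ A (modr v c)] =
  lebesgue_measure (A `&` `[0, c[).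
Proof.
move=> c0 mA.
set k := Num.floor (x / c).
set K := k%:~R * c.
have hk : K <= x < K + c.
  have := floor_itv (x / c); rewrite -/k intrD => /andP[h1 h2].
  rewrite ltr_pdivrMr // mulrDl mul1r in h2.
  by rewrite /K -ler_pdivlMr // h1 /=.
have hk1 : (k + 1)%:~R * c = K + c by rewrite intrD mulrDl mul1r.
set f := x - K.
have -> : [set v | x <= v < x + c /\ A (modr v c)] =
  ((fun v => v + (- K)) @^-1` (A `&` `[f, c[)) `|`
  ((fun v => v + (- (K + c))) @^-1` (A `&` `[0, f[)).
  apply/seteqP; split => v /=.
    move=> [/andP[h1 h2] hA].
    case: (ltrP v (K + c)) => hv.
      left; rewrite (@modr_eq _ _ c0 v k) // in hA; last by move: hk => /andP[? ?]; lra.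
      by split => //; rewrite in_itv /= /f; apply/andP; split; lra.
    right; rewrite (@modr_eq _ _ c0 v (k + 1)) ?hk1 // in hA; last lra.
    by split => //; rewrite in_itv /= /f; apply/andP; split; lra.
  move: hk => /andP[hk1' hk2'].
  case=> [] [hA]; rewrite in_itv /= /f => /andP[h1 h2].
    split; first by apply/andP; split; lra.
    by rewrite (@modr_eq _ _ c0 v k) //; lra.
  split; first by apply/andP; split; lra.
  rewrite (@modr_eq _ _ c0 v (k + 1)) ?hk1 //; lra.
have mI1 : measurable (A `&` `[f, c[) by apply: measurableI => //; exact: measurable_itv.
have mI2 : measurable (A `&` `[0, f[) by apply: measurableI => //; exact: measurable_itv.
have mpre (t : R) (B : set R) : measurable B -> measurable ((fun v => v + t) @^-1` B).
  move=> mB; have mf : measurable_fun setT (fun v : R => v + t).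
    by apply: measurable_funD => //; exact: measurable_cst.
  by rewrite -[X in measurable X]setTI; exact: mf.
pose I1 := A `&` `[f, c[. pose I2 := A `&` `[0, f[.
transitivity (lebesgue_measure I1 + lebesgue_measure I2)%E.
  rewrite -(leb_shift (- K) mI1) -(leb_shift (- (K + c)) mI2).
  apply: measureU; [exact: mpre | exact: mpre |].
  apply/seteqP; split => v //= [[_]]; rewrite !in_itv /= /f => /andP[h1 h2] [_].
  by move/andP => [h3 h4]; lra.
rewrite /I1 /I2 -measureU //; last first.
  apply/seteqP; split => v //= [[_]]; rewrite !in_itv /= => /andP[h1 h2] [_].
  by move/andP => [h3 h4]; lra.
congr (lebesgue_measure _); apply/seteqP; split => v /=.
  move: hk => /andP[? ?].
  by case=> -[hA /in_coP /andP[h1 h2]]; split => //; apply/in_coP; apply/andP; split;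
    rewrite /f in h1 h2 *; lra.
move=> [hA /in_coP /andP[h1 h2]].
by case: (ltrP v f) => hv; [right | left]; split => //; apply/in_coP; apply/andP; split.
Qed.

Lemma measurable_modr (R : realType) (c : R) : 0 < c ->
  measurable_fun setT (fun v : R => modr v c).
Proof.
move=> c0; rewrite /modr; apply: measurable_funB => //.
apply: measurable_funM; last exact: measurable_cst.
apply: nondecreasing_measurable => // u v uv.
by rewrite ler_int; apply: le_floor; rewrite ler_pM2r // invr_gt0.
Qed.

Lemma measurable_pre_modr (R : realType) (c : R) (A : set R) : 0 < c -> measurable A ->
  measurable [set v | A (modr v c)].
Proof.
move=> c0 mA; rewrite -[X in measurable X]setTI.
exact: (measurable_modr c0).
Qed.

Lemma leb_plus (R : realType) (c y : R) (A : set R) : 0 < c -> measurable A ->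
  lebesgue_measure ([set u | A (modr (u + y) c)] `&` `[0, c[) =
  lebesgue_measure (A `&` `[0, c[).
Proof.
move=> c0 mA; rewrite -(leb_window y c0 mA).
have mW : measurable [set v | y <= v < y + c /\ A (modr v c)].
  have -> : [set v | y <= v < y + c /\ A (modr v c)] =
    `[y, y + c[ `&` [set v | A (modr v c)].
    by apply/seteqP; split => v /=; rewrite in_itv.
  by apply: measurableI; [exact: measurable_itv | exact: measurable_pre_modr].
rewrite -(leb_shift y mW); congr (lebesgue_measure _).
apply/seteqP; split => v /=.
  by move=> [hA /in_coP /andP[h1 h2]]; split => //; apply/andP; split; lra.
by move=> [/andP[h1 h2] hA]; split => //; apply/in_coP; apply/andP; split; lra.
Qed.

Lemma leb_minus (R : realType) (c y : R) (A : set R) : 0 < c -> measurable A ->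
  lebesgue_measure ([set u | A (modr (y - u) c)] `&` `[0, c[) =
  lebesgue_measure (A `&` `[0, c[).
Proof.
move=> c0 mA; rewrite -(leb_window (y - c) c0 mA).
set W := [set v | y - c <= v < y - c + c /\ A (modr v c)].
set W' := [set v | y - c < v <= y /\ A (modr v c)].
have mW : measurable W.
  have -> : W = `[y - c, y - c + c[ `&` [set v | A (modr v c)].
    by apply/seteqP; split => v /=; rewrite in_itv.
  by apply: measurableI; [exact: measurable_itv | exact: measurable_pre_modr].
have mW' : measurable W'.
  have -> : W' = `]y - c, y] `&` [set v | A (modr v c)].
    by apply/seteqP; split => v /=; rewrite in_itv.
  by apply: measurableI; [exact: measurable_itv | exact: measurable_pre_modr].
have mW'y : measurable ((fun v => v + y) @^-1` W').
  have mf : measurable_fun setT (fun v : R => v + y).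
    by apply: measurable_funD => //; exact: measurable_cst.
  by rewrite -[X in measurable X]setTI; exact: mf.
have -> : [set u | A (modr (y - u) c)] `&` `[0, c[ =
    (-%R : _ -> measurableTypeR R) @^-1` ((fun v => v + y) @^-1` W').
  apply/seteqP; split => v /=.
    by move=> [hA /in_coP /andP[h1 h2]]; rewrite addrC; split => //; apply/andP; split; lra.
  by rewrite addrC => -[/andP[h1 h2] hA]; split => //; apply/in_coP; apply/andP; split; lra.
have := lebesgue_measureN mW'y; rewrite /pushforward => ->.
rewrite (leb_shift y mW').
apply/eqP; rewrite eq_le; apply/andP; split.
  apply: (@le_trans _ _ (lebesgue_measure (W `|` [set y]))).
    by apply: le_measure; rewrite ?inE //; [exact: measurableU | move=> v [/andP[h1 h2] hA];
      case: (eqVneq v y) => [->|hv]; [right | left; split => //; apply/andP; split; [lra|rewrite subrK; lra]]].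
  by rewrite measureU0 //; exact: lebesgue_measure_set1.
apply: (@le_trans _ _ (lebesgue_measure (W' `|` [set y - c]))).
  by apply: le_measure; rewrite ?inE //; [exact: measurableU | move=> v [/andP[h1 h2] hA];
    case: (eqVneq v (y - c)) => [->|hv]; [right | left; split => //; apply/andP; split; [lra|move: h2; rewrite subrK; lra]]].
by rewrite measureU0 //; exact: lebesgue_measure_set1.
Qed.

Section sigma_part.
Context d (T : measurableType d) (R : realType) (P : probability T R).
Context (I : finType) (J : {set I}) (X : I -> T -> R).
Hypothesis hX : mutually_independent P J X.

Definition cyl (S : {set I}) : set (set T) :=
  [set H | exists K : {set I}, exists B : I -> set R,
    [/\ K \subset S, (forall i, i \in K -> measurable (B i)) &
      H = [set w | forall i, i \in K -> B i (X i w)]]].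

Lemma meas_cyl_seq d' (T' : measurableType d') (Y : I -> T' -> R) (s : seq I) (B : I -> set R) :
  (forall i, i \in s -> measurable_fun setT (Y i) /\ measurable (B i)) ->
  measurable [set w | forall i, i \in s -> B i (Y i w)].
Proof.
elim: s => [|i s IH] h.
  by have -> : [set w | forall i, i \in [::] -> B i (Y i w)] = setT
    by apply/seteqP; split => w //= _ j; rewrite in_nil.
have -> : [set w | forall j, j \in i :: s -> B j (Y j w)] =
  Y i @^-1` B i `&` [set w | forall j, j \in s -> B j (Y j w)].
  apply/seteqP; split => w /=.
    move=> h1; split; first exact: (h1 i (mem_head _ _)).
    by move=> j js; apply: (h1 j); rewrite inE js orbT.
  by move=> [h1 h2] j; rewrite inE => /orP[/eqP->|]; [|exact: h2].
apply: measurableI; last by apply: IH => j js; apply: h; rewrite inE js orbT.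
have [mY mB] := h i (mem_head _ _).
by rewrite -[X in measurable X]setTI; exact: mY.
Qed.

Lemma meas_cyl d' (T' : measurableType d') (Y : I -> T' -> R) (K : {set I}) (B : I -> set R) :
  (forall i, i \in K -> measurable_fun setT (Y i) /\ measurable (B i)) ->
  measurable [set w | forall i, i \in K -> B i (Y i w)].
Proof.
move=> h.
have -> : [set w | forall i, i \in K -> B i (Y i w)] =
  [set w | forall i, i \in enum K -> B i (Y i w)].
  by apply/seteqP; split => w /= h1 i hi; apply: h1; move: hi; rewrite mem_enum.
by apply: meas_cyl_seq => i; rewrite mem_enum; exact: h.
Qed.

Lemma cyl_meas (S : {set I}) : S \subset J -> cyl S `<=` measurable.
Proof.
move=> SJ _ [K [B [KS mB ->]]].
apply: meas_cyl => i iK; split; last exact: mB.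
exact: (hX.1 i (fintype.subsetP SJ i (fintype.subsetP KS i iK))).
Qed.

Lemma sigma_sub (S : {set I}) : S \subset J -> <<s cyl S >> `<=` measurable.
Proof.
move=> SJ; apply: smallest_sub; first exact: sigma_algebra_measurable.
exact: cyl_meas.
Qed.

Lemma cyl_setI (S : {set I}) : setI_closed (cyl S).
Proof.
move=> _ _ [K1 [B1 [K1S mB1 ->]]] [K2 [B2 [K2S mB2 ->]]].
exists (K1 :|: K2); exists (fun i => (if i \in K1 then B1 i else setT) `&`
                              (if i \in K2 then B2 i else setT)).
split.
- by rewrite finset.subUset K1S K2S.
- move=> i _; apply: measurableI; case: ifP => // /[dup] h _;
    [exact: mB1 | exact: mB2].
- apply/seteqP; split => w /=.
    move=> [h1 h2] i; rewrite inE => _.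
    by split; case: ifP => // hi; [exact: h1 | exact: h2].
  move=> h; split => i hi; have := h i; rewrite finset.in_setU hi ?orbT => /(_ isT) /=; tauto.
Qed.


Lemma indep_sigma (S : {set I}) (e : I) (A : set R) : S \subset J -> e \in J ->
  e \notin S -> measurable A ->
  forall H, <<s cyl S >> H -> P (X e @^-1` A `&` H) = (P (X e @^-1` A) * P H)%E.
Proof.
move=> SJ eJ eS mA.
have mUA : measurable (X e @^-1` A).
  by rewrite -[X in measurable X]setTI; exact: (hX.1 e eJ).
have hC : forall S0 : set T, measurable S0 ->
    P (X e @^-1` A `&` S0) = (P (X e @^-1` A) * P S0)%E ->
    P (X e @^-1` A `&` ~` S0) = (P (X e @^-1` A) * P (~` S0))%E.
  move=> S0 mS h.
  rewrite -setDE measureD //.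
    transitivity (P (X e @^-1` A) - P (X e @^-1` A) * P S0)%E.
      by congr (_ - _)%E; exact: h.
    rewrite probability_setC // muleBr ?mule1 //; first exact: fin_num_measure.
  by rewrite -ge0_fin_numE // fin_num_measure.
have hU : forall F : (set T)^nat, (forall n, measurable (F n)) -> trivIset setT F ->
    (forall n, P (X e @^-1` A `&` F n) = (P (X e @^-1` A) * P (F n))%E) ->
    P (X e @^-1` A `&` \bigcup_n F n) = (P (X e @^-1` A) * P (\bigcup_n F n))%E.
  move=> F mF' tF hF.
  rewrite setI_bigcupr !measure_bigcup //; last first.
  + exact: trivIset_setIl.
  + by move=> n _; apply: measurableI.
  transitivity (\big[+%E/0]_(0 <= i <oo | i \in [set: nat]) (P (X e @^-1` A) * P (F i)))%E.
    by apply: eq_eseriesr => n _; exact: hF.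
  have -> : P (X e @^-1` A) = (fine (P (X e @^-1` A)))%:E.
    by rewrite fineK // fin_num_measure.
  by rewrite nneseriesZl.
apply: (@dynkin_induction _ (g_sigma_algebraType (cyl S)) (cyl S)).
- by [].
- exact: cyl_setI.
- by rewrite setIT probability_setT mule1.
- move=> _ [K [B [KS mB ->]]].
  pose B' := fun i => if i == e then A else B i.
  have eK : e \notin K by apply: contra eS; apply: (fintype.subsetP KS).
  have eKJ : e |: K \subset J.
    by rewrite finset.subUset finset.sub1set eJ /=; exact: fintype.subset_trans KS SJ.
  have mB' : forall i, i \in e |: K -> measurable (B' i).
    move=> i hi; rewrite /B'; have [_|ne] := eqVneq i e; first exact: mA.
    by apply: mB; move: hi; rewrite finset.in_setU1 (negbTE ne).
  have -> : X e @^-1` A `&` [set w | forall i, i \in K -> B i (X i w)] =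
    [set w | forall i, i \in e |: K -> B' i (X i w)].
    apply/seteqP; split => w /=.
      move=> [h1 h2] i; rewrite finset.in_setU1 /B' => /orP[/eqP ->|hi]; first by rewrite eqxx.
      by case: eqP => [-> //|_]; exact: h2.
    move=> h; split; first by have := h e; rewrite finset.setU11 /B' eqxx; apply.
    move=> i hi; have := h i; rewrite finset.in_setU1 hi orbT /B'; case: eqP => [ei|_]; last by apply.
    by move: hi; rewrite ei (negbTE eK).
  rewrite (hX.2 _ _ eKJ mB') big_setU1 //= /B' eqxx; congr (_ * _)%E.
  rewrite (hX.2 _ _ (fintype.subset_trans KS SJ) mB); apply: eq_bigr => i iK.
  by case: eqP => // ei; move: iK; rewrite ei (negbTE eK).
- move=> S' mS' h; exact: (hC S' (sigma_sub SJ mS') h).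
- move=> F mF tF hF; exact: (hU F (fun n => sigma_sub SJ (mF n)) tF hF).
Qed.

End sigma_part.

Lemma path_cross (T0 : eqType) (e : rel T0) (Q : pred T0) x p :
  path e x p -> Q x -> ~~ Q (last x p) -> exists u v, [/\ e u v, Q u & ~~ Q v].
Proof.
elim: p x => [|y p IH] x /=; first by move=> _ ->.
move=> /andP[exy py] Qx nQ.
case Qy: (Q y); first exact: IH py Qy nQ.
by exists x, y; rewrite Qy.
Qed.

Lemma conn_cross m (E : {set 'I_m * 'I_m}) (K : {set 'I_m}) (k i0 : 'I_m) :
  uconnected E -> k \in K -> i0 \notin K ->
  exists l p, [/\ l \in K, p \notin K & ((l, p) \in E) || ((p, l) \in E)].
Proof.
move=> hc kK i0K; have /connectP [p pth lst] := hc k i0.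
have := @path_cross _ _ (fun x => x \in K) _ _ pth kK; rewrite -lst.
move=> /(_ i0K) [u [v [huv hu hv]]].
by exists u, v; split.
Qed.

Lemma meas_fsum d' (T' : measurableType d') (R : realType) (I : finType) (Q : pred I)
  (h : I -> T' -> R) : (forall i, Q i -> measurable_fun setT (h i)) ->
  measurable_fun setT (fun x => \sum_(i | Q i) h i x).
Proof.
move=> mh.
have -> : (fun x => \sum_(i | Q i) h i x) =
  (fun x => \sum_(i <- index_enum I) (if Q i then h i x else 0)).
  by apply/funext => x; rewrite big_mkcond.
apply: (@measurable_sum _ T' R setT I (index_enum I) (fun i x => if Q i then h i x else 0)) => i.
case Qi: (Q i); [exact: mh | exact: measurable_cst].
Qed.

Lemma meas_tvec (R : realType) d' (T' : measurableType d') m (E : {set 'I_m * 'I_m}) (a : R)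
  (rr : 'I_m * 'I_m -> T' -> R) i : 0 < m%:R * a ->
  (forall f, f \in E -> (f.1 == i) || (f.2 == i) -> measurable_fun setT (rr f)) ->
  measurable_fun setT (tvec E a rr i).
Proof.
move=> c0 h; rewrite /tvec.
apply: (measurableT_comp (measurable_modr c0)).
apply: measurable_funB; apply: meas_fsum => f /andP[fE /eqP fi]; apply: h => //;
  by rewrite fi eqxx ?orbT.
Qed.

Section main.
Context (R : realType) d (T : measurableType d) (P : probability T R) (m : nat)
  (E : {set 'I_m * 'I_m}) (a : R) (r : 'I_m * 'I_m -> T -> R).
Hypothesis hc : 0 < m%:R * a.
Hypothesis hind : mutually_independent P E r.
Hypothesis hunif : forall e, e \in E -> uniform_on P (r e) 0 (m%:R * a).

Definition uu (B : set R) : \bar R :=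
  (lebesgue_measure (B `&` `[0%R, (m%:R * a)%R[) * (((m%:R * a)%R - 0%R)^-1)%:E)%E.

Lemma sum_split (F : 'I_m * 'I_m -> R) (Q : pred ('I_m * 'I_m)) e : e \in E ->
  \sum_(f in E | Q f) F f = (if Q e then F e else 0) + \sum_(f in E | Q f && (f != e)) F f.
Proof.
move=> eE; case: ifP => Qe.
  rewrite (bigD1 e) /=; last by rewrite eE Qe.
  by congr (_ + _); apply: eq_bigl => f; rewrite andbA.
rewrite add0r; apply: eq_bigl => f; have [->|] := eqVneq f e; last by rewrite andbT.
by rewrite Qe !andbF.
Qed.

Lemma step (l : 'I_m) (e : 'I_m * 'I_m) (K : {set 'I_m}) (B : 'I_m -> set R) (sg : bool) :
  e \in E -> l \in K ->
  (forall i, i \in K -> i != l -> (e.1 != i) && (e.2 != i)) ->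
  (if sg then (e.2 == l) && (e.1 != l) else (e.1 == l) && (e.2 != l)) ->
  (forall i, i \in K -> measurable (B i)) ->
  P [set w | forall i, i \in K -> B i (tvec E a r i w)] =
  (uu (B l) * P [set w | forall i, i \in K :\ l -> B i (tvec E a r i w)])%E.
Proof.
move=> eE lK hK hsg mB.
set S := E :\ e.
pose TS := g_sigma_algebraType (cyl r S).
have SE : S \subset E := subD1set E e.
have eS : e \notin S by rewrite setD11.
have mrS : forall f, f \in S -> measurable_fun (setT : set TS) (r f).
  move=> f fS _ B0 mB0; rewrite setTI; apply: sub_sigma_algebra.
  exists [set f]%SET, (fun _ => B0); split.
  - by rewrite finset.sub1set.
  - by [].
  - apply/seteqP; split => w /=.
      by move=> h i; rewrite finset.in_set1 => /eqP ->.
    by apply; rewrite finset.in_set1.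
pose Y w := \sum_(f in E | (f.2 == l) && (f != e)) r f w -
            \sum_(f in E | (f.1 == l) && (f != e)) r f w.
have mYS : measurable_fun (setT : set TS) Y.
  by apply: measurable_funB; apply: meas_fsum => f /andP[fE /andP[_ fe]];
    apply: mrS; rewrite in_setD1 fe fE.
have mY : measurable_fun setT Y.
  by apply: measurable_funB; apply: meas_fsum => f /andP[fE _]; exact: hind.1.
have mU : measurable_fun setT (r e) := hind.1 e eE.
pose G := [set w | forall i, i \in K :\ l -> B i (tvec E a r i w)].
have mtS : forall i, i \in K :\ l -> measurable_fun (setT : set TS) (@tvec R _ TS m E a r i).
  move=> i; rewrite in_setD1 => /andP[il iK]; apply: meas_tvec => // f fE hf.
  apply: mrS; rewrite in_setD1 fE andbT; apply/eqP => fe; move: hf; rewrite fe.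
  by have /andP[/negbTE -> /negbTE ->] := hK i iK il.
have GS : <<s cyl r S >> G.
  have := @meas_cyl R _ _ TS (fun i => @tvec R _ TS m E a r i) (K :\ l) B.
  apply => i iK; split; first exact: mtS.
  by apply: mB; move: iK; rewrite in_setD1 => /andP[].
have mG : measurable G := sigma_sub hind SE GS.
have tl : forall w, tvec E a r l w = modr (if sg then r e w + Y w else Y w - r e w) (m%:R * a).
  move=> w; rewrite /tvec /Y (sum_split _ _ eE) [in X in _ - X](sum_split _ _ eE).
  case: sg hsg => /andP[/eqP h1 h2]; rewrite h1 eqxx (negbTE h2).
    by rewrite add0r addrA.
  by rewrite add0r opprD addrA [_ - r e w + _]addrAC.
pose D : set (R * R) := if sg then [set q | B l (modr (q.2 + q.1) (m%:R * a))]
                        else [set q | B l (modr (q.1 - q.2) (m%:R * a))].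
have mD : measurable D.
  rewrite /D; case: ifP => _.
    have mf : measurable_fun setT (fun q : R * R => modr (q.2 + q.1) (m%:R * a)).
      apply: (measurableT_comp (measurable_modr hc)).
      exact: measurable_funD measurable_snd measurable_fst.
    by rewrite -[X in measurable X]setTI; apply: mf => //; exact: mB.
  have mf : measurable_fun setT (fun q : R * R => modr (q.1 - q.2) (m%:R * a)).
    apply: (measurableT_comp (measurable_modr hc)).
    exact: measurable_funB measurable_fst measurable_snd.
  by rewrite -[X in measurable X]setTI; apply: mf => //; exact: mB.
have ev : [set w | forall i, i \in K -> B i (tvec E a r i w)] =
    [set w | D (Y w, r e w)] `&` G.
  have hD : forall w, D (Y w, r e w) <-> B l (tvec E a r l w).
    by move=> w; rewrite tl /D; case: ifP.
  apply/seteqP; split => w /=.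
    move=> h; split; first by apply/hD; exact: h.
    by move=> i; rewrite in_setD1 => /andP[_]; exact: h.
  move=> [/hD h1 h2] i iK; have [->//|il] := eqVneq i l.
  by apply: h2; rewrite in_setD1 il iK.
have sec : forall y, P (r e @^-1` xsection D y) = uu (B l).
  move=> y; rewrite (hunif eE).2; last exact: measurable_xsection.
  rewrite /uu; congr (_ * _)%E.
  have -> : xsection D y = if sg then [set u | B l (modr (u + y) (m%:R * a))]
                           else [set u | B l (modr (y - u) (m%:R * a))].
    by rewrite /xsection /D; case: ifP => _; apply/seteqP; split => u /=;
      rewrite inE.
  by case: ifP => _; [apply: leb_plus | apply: leb_minus] => //; apply: mB.
have indep : forall A B', measurable A -> measurable B' ->
    P (r e @^-1` A `&` (Y @^-1` B' `&` G)) = (P (r e @^-1` A) * P (Y @^-1` B' `&` G))%E.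
  move=> A B' mA mB'; apply: (indep_sigma hind SE eE eS mA).
  apply: (@measurableI _ TS) => //.
  by have := mYS measurableT B' mB'; rewrite setTI.
by rewrite ev (key_lemma mU mY mG mD indep sec).
Qed.


Lemma claim_empty (B : 'I_m -> set R) :
  P [set w | forall i, i \in (finset.set0 : {set 'I_m}) -> B i (tvec E a r i w)] =
  (\prod_(i in (finset.set0 : {set 'I_m})) uu (B i))%E.
Proof.
rewrite big_set0.
have -> : [set w | forall i, i \in (finset.set0 : {set 'I_m}) -> B i (tvec E a r i w)] = setT.
  by apply/seteqP; split => w //= _ i; rewrite finset.in_set0.
exact: probability_setT.
Qed.

Lemma main_claim (i0 : 'I_m) : uconnected E -> forall n (K : {set 'I_m}) (B : 'I_m -> set R),
  (#|K| <= n)%N -> i0 \notin K -> (forall i, i \in K -> measurable (B i)) ->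
  P [set w | forall i, i \in K -> B i (tvec E a r i w)] = (\prod_(i in K) uu (B i))%E.
Proof.
move=> hconn; elim=> [|n IH] K B.
  by rewrite leqn0 cards_eq0 => /eqP -> _ _; exact: claim_empty.
move=> hK i0K mB; have [->|[k kK]] := set_0Vmem K; first exact: claim_empty.
have [l [p [lK pK hE]]] := conn_cross hconn kK i0K.
have pl : p != l by apply: contraNneq pK => ->.
have hK' : forall i, i \in K -> i != l -> (l != i) && (p != i).
  move=> i iK il; rewrite eq_sym il /=; apply: contraNneq pK => ->; exact: iK.
have hK'' : forall i, i \in K -> i != l -> (p != i) && (l != i).
  by move=> i iK il; rewrite andbC; exact: hK'.
have IH' : P [set w | forall i, i \in K :\ l -> B i (tvec E a r i w)] =
    (\prod_(i in K :\ l) uu (B i))%E.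
  apply: IH.
  - by move: hK; rewrite (cardsD1 l K) lK add1n ltnS.
  - by rewrite in_setD1 negb_and i0K orbT.
  - by move=> i; rewrite in_setD1 => /andP[_]; exact: mB.
rewrite (big_setD1 l lK) -IH'.
case/orP: hE => hE.
  have hs : ((l, p).1 == l) && ((l, p).2 != l) by rewrite /= eqxx pl.
  exact: (@step l (l, p) K B false hE lK hK' hs mB).
have hs : ((p, l).2 == l) && ((p, l).1 != l) by rewrite /= eqxx pl.
exact: (@step l (p, l) K B true hE lK hK'' hs mB).
Qed.

Lemma marginal (i0 i : 'I_m) : uconnected E -> i != i0 -> forall A, measurable A ->
  P (tvec E a r i @^-1` A) = uu A.
Proof.
move=> hconn ii0 A mA.
have := @main_claim i0 hconn _ [set i]%SET (fun _ => A) (leqnn _).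
rewrite finset.in_set1 eq_sym ii0 big_set1 => /(_ isT) <-; last by [].
congr (P _); apply/seteqP; split => w /=.
  by move=> h j; rewrite finset.in_set1 => /eqP ->.
by apply; rewrite finset.in_set1.
Qed.

Lemma meas_t i : measurable_fun setT (tvec E a r i).
Proof. by apply: meas_tvec => // f fE _; exact: hind.1. Qed.

End main.

Lemma sum_tvec_mod (R : realType) d (T : measurableType d) m (E : {set 'I_m * 'I_m})
  (a : R) (r : 'I_m * 'I_m -> T -> R) w : 0 <= m%:R * a ->
  modr (\sum_(i < m) tvec E a r i w) (m%:R * a) = 0.
Proof.
move=> c0; set c := m%:R * a.
have [n ->] : exists n : int, \sum_(i < m) tvec E a r i w = n%:~R * c.
  rewrite /tvec /modr sumrB.
  have -> : \sum_(i < m) (\sum_(f in E | f.2 == i) r f w - \sum_(f in E | f.1 == i) r f w) = 0.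
    rewrite sumrB.
    rewrite -(partition_big (fun f : 'I_m * 'I_m => f.2) predT) //.
    by rewrite -(partition_big (fun f : 'I_m * 'I_m => f.1) predT) // subrr.
  rewrite add0r.
  have [k ->] : exists k : int, \sum_(i < m) (Num.floor ((\sum_(f in E | f.2 == i) r f w -
      \sum_(f in E | f.1 == i) r f w) / c))%:~R * c = k%:~R * c.
    apply: (big_ind (fun x => exists k : int, x = k%:~R * c)).
    - by exists 0; rewrite mul0r.
    - by move=> x y [k1 ->] [k2 ->]; exists (k1 + k2); rewrite intrD mulrDl.
    - by move=> i _; exists (Num.floor ((\sum_(f in E | f.2 == i) r f w -
                                       \sum_(f in E | f.1 == i) r f w) / c)).
  by exists (- k); rewrite mulrNz mulNr.
case: (ltrP 0 c) => [c_gt0|c_le0]; first exact: modr_int.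
have -> : c = 0 by apply/eqP; rewrite eq_le c_le0 c0.
by rewrite /modr !mulr0 subr0.
Qed.

Unset Implicit Arguments.

Theorem lemma1 (R : realType) (d : measure_display) (T : measurableType d)
  (P : probability T R) (m : nat) (E : {set 'I_m * 'I_m}) (a : R)
  (r : 'I_m * 'I_m -> T -> R) :
  0 < a ->
  mutually_independent P E r ->
  (forall e, e \in E -> uniform_on P (r e) 0 (m%:R * a)) ->
  uconnected E ->
  (forall w, modr (\sum_(i < m) tvec E a r i w) (m%:R * a) = 0) /\
  (forall i0 : 'I_m,
     mutually_independent P [set i | i != i0] (tvec E a r) /\
     (forall i, i != i0 -> uniform_on P (tvec E a r i) 0 (m%:R * a))).
Proof.
move=> a0 hind hunif hconn; split.
  by move=> w; apply: sum_tvec_mod; apply: mulr_ge0 => //; exact: ltW.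
move=> i0.
have hc : 0 < m%:R * a.
  by apply: mulr_gt0 => //; rewrite ltr0n; exact: (leq_ltn_trans (leq0n i0) (ltn_ord i0)).
split.
  split; first by move=> i _; exact: (meas_t hc hind).
  move=> K B KJ mB.
  have i0K : i0 \notin K.
    by apply/negP => /(fintype.subsetP KJ); rewrite inE eqxx.
  rewrite (main_claim hc hind hunif hconn (leqnn #|K|) i0K mB).
  apply: eq_bigr => i iK.
  have hi : i != i0 by have := fintype.subsetP KJ i iK; rewrite inE.
  by rewrite (marginal hc hind hunif hconn hi (mB i iK)).
move=> i ii0; split; first exact: (meas_t hc hind).
by move=> A mA; exact: (marginal hc hind hunif hconn ii0 mA).
Qed.
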